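(* Let $n,m$ be positive integers and $L=L(q,u,z)$ a smooth function on $\mathbb R^n\times\mathbb R^n\times\mathbb R^m$. Let $q:[t_0,t_1]\to\mathbb R^n$ be $C^2$ and let $z:[t_0,t_1]\to\mathbb R^m$, $p:[t_0,t_1]\to\mathbb R^n$, $\mu:[t_0,t_1]\to\mathbb R^m$ be $C^1$ curves such that, with $u=\dot q$ and all derivatives of $L$ evaluated at $(q(t),\dot q(t),z(t))$, $$\dot z_i=L,\qquad \dot p_k=-\Big(\sum_{i=1}^m\mu_i\Big)\frac{\partial L}{\partial q^k},\qquad \dot\mu_i=-\Big(\sum_{j=1}^m\mu_j\Big)\frac{\partial L}{\partial z_i},$$ $$p_k=-\Big(\sum_{i=1}^m\mu_i\Big)\frac{\partial L}{\partial u^k},\qquad \mu_i(t_1)=1,$$ for all $i=1,\dots,m$, $k=1,\dots,n$, $t\in[t_0,t_1]$. Then $q$ satisfies, for all $k$ and $t$, $$\frac{d}{dt}\Big(\frac{\partial L}{\partial\dot q^k}\Big)-\frac{\partial L}{\partial q^k}=\Big(\sum_{i=1}^m\frac{\partial L}{\partial z_i}\Big)\frac{\partial L}{\partial\dot q^k},$$ where $\partial L/\partial\dot q^k$ denotes $\partial L/\partial u^k$ evaluated at $u=\dot q$.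
   Context: These are the Pontryagin maximum principle necessary conditions for the $m$-contact Herglotz variational problem: extremize the terminal cost $\Phi=\sum_{i=1}^mz_i(t_1)$ subject to the control system $\dot q^k=u^k$, $\dot z_i=L(q,u,z)$ ($i=1,\dots,m$) with fixed initial data $q(t_0)=q_0$, $z_i(t_0)=z_i^0$, using the Pontryagin Hamiltonian $H=p_ku^k+\sum_{i=1}^m\mu_iL(q,u,z)$ (adjoint equations $\dot p_k=-\partial H/\partial q^k$, $\dot\mu_i=-\partial H/\partial z_i$, stationarity $\partial H/\partial u^k=0$, transversality $\mu_i(t_1)=1$). The concluding equations are called the $m$-contact Herglotz (Euler–Lagrange) equations. *)

(* Defs.v *)
From HB Require Import structures.
From mathcomp Require Import all_boot all_order all_algebra.
From mathcomp Require Import all_classical all_reals all_analysis.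
Set Implicit Arguments. Unset Strict Implicit. Unset Printing Implicit Defensive.
Import Order.TTheory GRing.Theory Num.Theory.
Import numFieldNormedType.Exports.
Local Open Scope classical_set_scope.
Local Open Scope ring_scope.

Section Defs.
Variable R : realType.

Fixpoint iterD {V W : normedModType R} (vs : seq V) (f : V -> W) : V -> W :=
  match vs with
  | [::] => f
  | v :: vs' => fun x => 'D_v (iterD vs' f) x
  end.

Definition smooth {V W : normedModType R} (f : V -> W) : Prop :=
  forall vs : seq V,
    continuous (iterD vs f) /\ (forall (v x : V), derivable (iterD vs f) x v).

Definition uncurryL n m (L : 'rV[R]_n -> 'rV[R]_n -> 'rV[R]_m -> R)
  (x : ('rV[R]_n * 'rV[R]_n) * 'rV[R]_m) : R := L x.1.1 x.1.2 x.2.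

Definition dLq n m (L : 'rV[R]_n -> 'rV[R]_n -> 'rV[R]_m -> R) (k : 'I_n)
  (q u : 'rV[R]_n) (z : 'rV[R]_m) : R :=
  'D_(delta_mx 0 k) (fun x => L x u z) q.
Definition dLu n m (L : 'rV[R]_n -> 'rV[R]_n -> 'rV[R]_m -> R) (k : 'I_n)
  (q u : 'rV[R]_n) (z : 'rV[R]_m) : R :=
  'D_(delta_mx 0 k) (fun x => L q x z) u.
Definition dLz n m (L : 'rV[R]_n -> 'rV[R]_n -> 'rV[R]_m -> R) (i : 'I_m)
  (q u : 'rV[R]_n) (z : 'rV[R]_m) : R :=
  'D_(delta_mx 0 i) (fun x => L q u x) z.

(* f : R -> V has derivative d at t relative to the set A (one-sided at the
   endpoints of an interval): the difference quotient tends to d as s -> t, s in A, s <> t. *)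
Definition has_deriv_within {V : normedModType R} (f : R -> V) (A : set R) (t : R) (d : V)
  : Prop :=
  (fun s => (s - t)^-1 *: (f s - f t)) @ within (fun s => A s /\ s != t) (nbhs t) --> d.

End Defs.

(* Main.v *)
Require Import Defs.
From HB Require Import structures.
From mathcomp Require Import all_boot all_order all_algebra.
From mathcomp Require Import all_classical all_reals all_analysis.
From mathcomp Require Import ring lra.
Import Order.TTheory GRing.Theory Num.Theory.
Import numFieldNormedType.Exports.
Local Open Scope classical_set_scope.
Local Open Scope ring_scope.

Section Hdw.
Context {R : realType}.

Lemma hdw_lin (V W : normedModType R) (g : V -> W) (f : R -> V) A t d :
  (forall a x, g (a *: x) = a *: g x) -> (forall x y, g (x - y) = g x - g y) ->
  continuous g ->
  has_deriv_within f A t d -> has_deriv_within (g \o f) A t (g d).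
Proof.
move=> gZ gB gc H.
have E : (fun s => (s - t)^-1 *: ((g \o f) s - (g \o f) t)) =
   g \o (fun s => (s - t)^-1 *: (f s - f t)).
  by apply/funext => s /=; rewrite gZ gB.
rewrite /has_deriv_within E.
apply: cvg_comp H _; exact: gc.
Qed.

Lemma hdw_sum (k : nat) (F : 'I_k -> R -> R) A t (d : 'I_k -> R) :
  (forall i, has_deriv_within (F i) A t (d i)) ->
  has_deriv_within (fun s => \sum_(i < k) F i s) A t (\sum_(i < k) d i).
Proof.
move=> H.
have E : (fun s => (s - t)^-1 *: ((\sum_(i < k) F i s) - (\sum_(i < k) F i t))) =
   (fun s => \sum_(i < k) (s - t)^-1 *: (F i s - F i t)).
  by apply/funext => s /=; rewrite -sumrB scaler_sumr.
rewrite /has_deriv_within E.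
apply: cvg_big => //.
  exact: add_continuous.
move=> i _; exact: H.
Qed.

Lemma hdw_cont (V : normedModType R) (f : R -> V) A t d :
  has_deriv_within f A t d ->
  f @ within (fun s => A s /\ s != t) (nbhs t) --> f t.
Proof.
move=> H.
have E : {near within (fun s => A s /\ s != t) (nbhs t),
    (fun s => f t + (s - t) *: ((s - t)^-1 *: (f s - f t))) =1 f}.
  near=> s.
  have [_ st] : A s /\ s != t by near: s; apply: withinT.
  by rewrite scalerA mulfV ?subr_eq0 // scale1r addrC subrK.
apply: cvg_trans; first exact: (near_eq_cvg E).
have H0 : (fun s : R => s - t) @ nbhs t --> (0:R).
  rewrite -[X in _ --> X](subrr t).
  apply: cvgB; [exact: cvg_id | exact: cvg_cst].
have Ht : (fun s : R => s - t) @ within (fun s => A s /\ s != t) (nbhs t) --> (0:R).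
  exact: cvg_within_filter H0.
have H2 : (fun s => f t + (s - t) *: ((s - t)^-1 *: (f s - f t)))
   @ within (fun s => A s /\ s != t) (nbhs t) --> f t + 0 *: d.
  apply: cvgD; first exact: cvg_cst.
  exact: cvgZ Ht H.
by rewrite scale0r addr0 in H2.
Unshelve. all: by end_near. Qed.

Lemma hdw_cont_within (V : normedModType R) (f : R -> V) (A : set R) (d : R -> V) :
  (forall t, A t -> has_deriv_within f A t (d t)) -> {within A, continuous f}.
Proof.
move=> H; apply/subspace_continuousP => x Ax.
have Hc := @hdw_cont V f A x (d x) (H x Ax).
move=> U /[dup] /nbhs_singleton Ux /Hc.
move=> HU.
have {}HU : {near nbhs x, (fun s => A s /\ s != x) `<=` f @^-1` U} := HU.
change ({near nbhs x, A `<=` f @^-1` U}).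
move: HU; apply: filterS => s HP As.
case: (eqVneq s x) => [->|sx]; first exact: Ux.
exact: HP.
Qed.

Lemma shift_dnbhs (P : set R) (t : R) : (\forall s \near t, P s) ->
  (fun h => h + t) @ (0:R)^' `=>` within (fun s => P s /\ s != t) (nbhs t).
Proof.
move=> HP X HX.
have c : (fun h : R => h + t) @ (nbhs (0:R)) --> t.
  rewrite -[X in _ --> X](add0r t).
  apply: cvgD; [exact: cvg_id | exact: cvg_cst].
have H1 : \forall h \near (0:R), P (h + t) /\ (P (h + t) /\ h + t != t -> X (h + t)).
  exact: (c _ (filterI HP HX)).
change ({near nbhs (0:R), (fun y : R => y != 0) `<=` (fun h => X (h + t))}).
move: H1; apply: filterS => h [Ph Xh] h0.
apply: Xh; split => //.
by rewrite -subr_eq0 addrK.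
Qed.

Lemma hdw_is_derive (f : R -> R) (a b t d : R) : a < t < b ->
  has_deriv_within f [set s | a <= s <= b] t d -> is_derive t 1 f d.
Proof.
move=> abt H.
have K : (fun h : R => h^-1 *: ((f \o shift t) (h *: 1) - f t)) @ (0:R)^' --> d.
  have -> : (fun h : R => h^-1 *: ((f \o shift t) (h *: 1) - f t)) =
     (fun s => (s - t)^-1 *: (f s - f t)) \o (fun h => h + t).
    by apply/funext => h /=; rewrite addrK /shift /= [h *: 1]mulr1.
  apply: (@cvg_comp _ _ _ (fun h => h + t) (fun s => (s - t)^-1 *: (f s - f t)) _ _ _ _ H).
  apply: shift_dnbhs.
  have := near_in_itvoo (a := a) (b := b) (x := t).
  rewrite in_itv /= abt => /(_ isT).
  apply: filterS => s; rewrite in_itv /= => /andP[/ltW -> /ltW ->] //.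
apply: DeriveDef; first exact: cvgP K.
exact: cvg_lim K.
Qed.

End Hdw.

Lemma nonvanish {R : realType} (S Z : R -> R) (a b : R) : a < b ->
  (forall s, a <= s <= b -> has_deriv_within S [set s | a <= s <= b] s (- (S s * Z s))) ->
  {within [set s | a <= s <= b], continuous Z} -> S b != 0 ->
  forall s, a <= s <= b -> S s != 0.
Proof.
set I := [set s | a <= s <= b].
move=> ab HS HZ Sb tau Itau; apply/negP => /eqP S0.
have HSc : {within I, continuous S} := @hdw_cont_within _ _ S I _ HS.
have IE : [set` `[a, b]] = I.
  by apply/seteqP; split => x /=; rewrite in_itv /=.
have [c Ic Kmax] : exists2 c, c \in `[a, b] & forall s, s \in `[a, b] -> `|Z s| <= `|Z c|.
  apply: EVT_max (ltW ab) _.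
  rewrite IE; apply/subspace_continuousP => x Ix.
  apply: cvg_norm.
  by move/subspace_continuousP: HZ; apply.
set K := `|Z c|.
have taub : tau < b.
  rewrite lt_neqAle; case/andP: Itau => _ ->; rewrite andbT.
  by apply/negP => /eqP tb; move: Sb; rewrite -tb S0 eqxx.
set e := fun s => expR (- (2 * K) * s).
set H := fun s => S s * S s * e s.
set df := fun s => - (2 * e s * (S s * S s) * (K + Z s)).
have Hder : forall x, x \in `]tau, b[ -> is_derive x 1 H (df x).
  move=> x; rewrite in_itv /= => /andP[taux xb].
  have ax : a < x by case/andP: Itau => at0 _; exact: le_lt_trans at0 taux.
  have dS : is_derive x 1 S (- (S x * Z x)).
    apply: (@hdw_is_derive R S a b x); first by rewrite ax xb.
    by apply: HS; rewrite !ltW.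
  have dg : is_derive x 1 (fun s => - (2 * K) * s) (- (2 * K)).
    have := is_deriveZ (- (2 * K)) (is_derive_id x (1:R)).
    by move=> h; apply: (is_derive_eq h); rewrite [LHS]mulr1.
  have de : is_derive x 1 e (expR (- (2 * K) * x) * (- (2 * K))).
    exact: is_derive1_comp.
  have := is_deriveM (is_deriveM dS dS) de.
  move=> h; apply: is_derive_eq.
  rewrite /df /e /=.
  set E := expR _.
  change (S x * S x * (E * - (2 * K)) + E * (S x * - (S x * Z x) + S x * - (S x * Z x)) =
     - (2 * E * (S x * S x) * (K + Z x))).
  ring.
have ec : continuous e.
  move=> x; apply: (@continuous_comp _ _ _ (fun s => - (2 * K) * s) expR).
    by apply: cvgM; [exact: cvg_cst | exact: cvg_id].
  exact: continuous_expR.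
have Hc : {within `[tau, b], continuous H}.
  apply: (@continuous_subspaceW _ _ _ I).
    move=> x /=; rewrite in_itv /= => /andP[tx xb].
    by case/andP: Itau => at0 _; rewrite /I /= (le_trans at0 tx) xb.
  apply/subspace_continuousP => x Ix.
  have Sx : S s @[s --> within I (nbhs x)] --> S x.
    by move/subspace_continuousP: HSc; apply.
  apply: cvgM; first exact: cvgM.
  exact: cvg_within_filter (ec x).
have [c' c'in Eq] := MVT taub Hder Hc.
have Hb : 0 < H b.
  apply: mulr_gt0; last exact: expR_gt0.
  by rewrite -expr2 exprn_even_gt0 //= Sb orbT.
have Htau : H tau = 0 by rewrite /H S0 !mul0r.
have c'ab : c' \in `[a, b].
  move: c'in; rewrite !in_itv /= => /andP[t1 t2].
  by case/andP: Itau => at0 _; rewrite (le_trans at0 (ltW t1)) ltW.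
have KZ : 0 <= K + Z c'.
  have := Kmax c' c'ab; rewrite -/K => h.
  have := lerNnormlW h; lra.
have ep : 0 < e c' by exact: expR_gt0.
have S2 : 0 <= S c' * S c' by rewrite -expr2 sqr_ge0.
have dfle : df c' <= 0.
  rewrite /df oppr_le0; apply: mulr_ge0 => //.
  by apply: mulr_ge0 => //; apply: mulr_ge0 => //; lra.
have : df c' * (b - tau) <= 0.
  by apply: mulr_le0_ge0 => //; lra.
rewrite -Eq Htau subr0; lra.
Qed.

Lemma dLz_D {R : realType} n m (L : 'rV[R]_n -> 'rV[R]_n -> 'rV[R]_m -> R) i q u z :
  dLz L i q u z = 'D_(((0:'rV[R]_n), (0:'rV[R]_n)), delta_mx 0 i) (uncurryL L) ((q, u), z).
Proof.
rewrite /dLz /derive. f_equal. f_equal.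
apply/funext => h /=.
rewrite /uncurryL /shift /=.
by rewrite !scaler0 !add0r.
Qed.

Lemma Zcont {R : realType} n m (L : 'rV[R]_n -> 'rV[R]_n -> 'rV[R]_m -> R)
  (hL : smooth (uncurryL L)) (A : set R) (q qd : R -> 'rV[R]_n) (z : R -> 'rV[R]_m) :
  {within A, continuous q} -> {within A, continuous qd} -> {within A, continuous z} ->
  {within A, continuous (fun s => \sum_(i < m) dLz L i (q s) (qd s) (z s))}.
Proof.
move=> /subspace_continuousP cq /subspace_continuousP cqd /subspace_continuousP cz.
apply/subspace_continuousP => x Ax.
apply: cvg_big => //; first exact: add_continuous.
move=> i _.
under eq_fun do rewrite dLz_D.
rewrite dLz_D.
have cg : (fun s => ((q s, qd s), z s)) @ within A (nbhs x) --> ((q x, qd x), z x).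
  have c1 : (fun s => (q s, qd s)) @ within A (nbhs x) --> (q x, qd x)
    by exact: (cvg_pair (cq x Ax) (cqd x Ax)).
  exact: (cvg_pair c1 (cz x Ax)).
have := (hL [:: (((0:'rV[R]_n), (0:'rV[R]_n)), delta_mx 0 i)]).1 ((q x, qd x), z x).
move=> h.
have hc := (@cvg_comp _ _ _ _ _ _ _ _ cg h).
move=> U HU; exact: (hc U HU).
Qed.

Theorem mainTheorem8 (R : realType) (n m : nat) (hn : (0 < n)%N) (hm : (0 < m)%N)
  (L : 'rV[R]_n -> 'rV[R]_n -> 'rV[R]_m -> R) (hL : smooth (uncurryL L))
  (t0 t1 : R) (ht : t0 < t1)
  (q qd qdd : R -> 'rV[R]_n) (z zd : R -> 'rV[R]_m)
  (p pd : R -> 'rV[R]_n) (mu mud : R -> 'rV[R]_m) :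
  let I := [set t : R | t0 <= t <= t1] in
  (* q is C^2 on [t0,t1], with first and second derivatives qd, qdd *)
  (forall t, I t -> has_deriv_within q I t (qd t)) ->
  (forall t, I t -> has_deriv_within qd I t (qdd t)) ->
  {within I, continuous qdd} ->
  (* z, p, mu are C^1 on [t0,t1], with derivatives zd, pd, mud *)
  (forall t, I t -> has_deriv_within z I t (zd t)) -> {within I, continuous zd} ->
  (forall t, I t -> has_deriv_within p I t (pd t)) -> {within I, continuous pd} ->
  (forall t, I t -> has_deriv_within mu I t (mud t)) -> {within I, continuous mud} ->
  (* the Pontryagin conditions *)
  (forall t, I t -> forall i : 'I_m, zd t 0 i = L (q t) (qd t) (z t)) ->
  (forall t, I t -> forall k : 'I_n,
     pd t 0 k = - (\sum_(i < m) mu t 0 i) * dLq L k (q t) (qd t) (z t)) ->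
  (forall t, I t -> forall i : 'I_m,
     mud t 0 i = - (\sum_(j < m) mu t 0 j) * dLz L i (q t) (qd t) (z t)) ->
  (forall t, I t -> forall k : 'I_n,
     p t 0 k = - (\sum_(i < m) mu t 0 i) * dLu L k (q t) (qd t) (z t)) ->
  (forall i : 'I_m, mu t1 0 i = 1) ->
  (* the m-contact Herglotz equations *)
  forall k : 'I_n, forall t, I t ->
    has_deriv_within (fun s => dLu L k (q s) (qd s) (z s)) I t
      (dLq L k (q t) (qd t) (z t)
       + (\sum_(i < m) dLz L i (q t) (qd t) (z t)) * dLu L k (q t) (qd t) (z t)).
Proof.
move=> I Hq Hqd Hqddc Hz Hzc Hp Hpc Hmu Hmuc Ezd Epd Emud Ep Emu1 k t It.
set S := fun s => \sum_(i < m) mu s 0 i.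
set Z := fun s => \sum_(i < m) dLz L i (q s) (qd s) (z s).
set U := fun s => dLu L k (q s) (qd s) (z s).
have Hmui : forall i s, I s -> has_deriv_within (fun s => mu s 0 i) I s (mud s 0 i).
  move=> i s Is.
  have gZ : forall (a : R) (M : 'rV[R]_m), (a *: M) 0 i = a *: M 0 i by move=> a M; rewrite !mxE.
  have gB : forall (M N : 'rV[R]_m), (M - N) 0 i = M 0 i - N 0 i by move=> M N; rewrite !mxE.
  have gc : continuous (fun M : 'rV[R]_m => M 0 i) by exact: coord_continuous.
  have h := (@hdw_lin _ _ _ (fun M : 'rV[R]_m => M 0 i) mu I s (mud s)
     gZ gB gc (Hmu s Is)).
  exact: h.
have HSd : forall s, I s -> has_deriv_within S I s (- (S s * Z s)).
  move=> s Is.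
  have := @hdw_sum R m (fun i s => mu s 0 i) I s (fun i => mud s 0 i) (fun i => Hmui i s Is).
  have -> : \sum_(i < m) mud s 0 i = - (S s * Z s).
    by rewrite (eq_bigr _ (fun i _ => Emud s Is i)) -mulr_sumr mulNr.
  by [].
have HZc : {within I, continuous Z}.
  apply: Zcont => //.
  - exact: (@hdw_cont_within _ _ q I _ Hq).
  - exact: (@hdw_cont_within _ _ qd I _ Hqd).
  - exact: (@hdw_cont_within _ _ z I _ Hz).
have St1 : S t1 != 0.
  rewrite /S (eq_bigr (fun=> 1)); last by move=> i _; rewrite Emu1.
  by rewrite sumr_const card_ord pnatr_eq0 -lt0n.
have HS0 : forall s, I s -> S s != 0.
  move=> s Is.
  have h := @nonvanish R S Z t0 t1 ht HSd HZc St1.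
  exact: h.
have Hpk : forall s, I s -> has_deriv_within (fun s => p s 0 k) I s (pd s 0 k).
  move=> s Is.
  have gZ : forall (a : R) (M : 'rV[R]_n), (a *: M) 0 k = a *: M 0 k by move=> a M; rewrite !mxE.
  have gB : forall (M N : 'rV[R]_n), (M - N) 0 k = M 0 k - N 0 k by move=> M N; rewrite !mxE.
  have gc : continuous (fun M : 'rV[R]_n => M 0 k) by exact: coord_continuous.
  have h := (@hdw_lin _ _ _ (fun M : 'rV[R]_n => M 0 k) p I s (pd s)
     gZ gB gc (Hp s Is)).
  exact: h.
rewrite /has_deriv_within.
set F := within (fun s => I s /\ s != t) (nbhs t).
have E : {near F, (fun s => (- ((s - t)^-1 *: (p s 0 k - p t 0 k))
        - U t * ((s - t)^-1 *: (S s - S t))) * (S s)^-1) =1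
     (fun s => (s - t)^-1 *: (U s - U t))}.
  near=> s.
  have [Is st] : I s /\ s != t by near: s; apply: withinT.
  have eps := Ep s Is k; have ept := Ep t It k.
  have Ss := HS0 s Is.
  have st0 : s - t != 0 by rewrite subr_eq0.
  rewrite /= eps ept -/(S s) -/(S t) -/(U s) -/(U t).
  set a := S s; set b := S t; set u := U s; set v := U t.
  change ((- ((s - t)^-1 * (- a * u - - b * v)) - v * ((s - t)^-1 * (a - b))) * a^-1
    = (s - t)^-1 * (u - v)).
  by field; rewrite Ss st0.
apply: cvg_trans; first exact: (near_eq_cvg E).
have HPl := Hpk t It.
have HSl := HSd t It.
have HSc := @hdw_cont _ _ S I t _ HSl.
have L1 : (fun s => (- ((s - t)^-1 *: (p s 0 k - p t 0 k))
        - U t * ((s - t)^-1 *: (S s - S t))) * (S s)^-1) @ F -->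
     (- pd t 0 k - U t * (- (S t * Z t))) * (S t)^-1.
  apply: cvgM.
    apply: cvgB; first exact: cvgN.
    by apply: cvgM; [exact: cvg_cst | exact: HSl].
  exact: cvgV (HS0 t It) HSc.
have -> : dLq L k (q t) (qd t) (z t) + Z t * U t =
    (- pd t 0 k - U t * (- (S t * Z t))) * (S t)^-1.
  rewrite (Epd t It k) -/(S t).
  have := HS0 t It; set b := S t => b0.
  by field.
exact: L1.
Unshelve. all: by end_near.
Qed.
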